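(* Let $f\colon[n]^2\to\{0,1\}$ be $2$-column-wise-monotone with $f(1,j)=f(n,j)=0$ for all $j\in[n]$. Then $\mathrm{dist}(f,\mathcal{M}^{(2)}_2)\leq L_1(\overline{f},\mathcal{M}_1)+L_1(\underline{f},\mathcal{M}_1)$. In particular, if $f$ is $\varepsilon$-far from $2$-monotone, then at least one of the two sequences $\underline{f},\overline{f}$ satisfies $L_1(\cdot,\mathcal{M}_1)\geq\varepsilon/2$.
   Context: $[n]^2$ is ordered coordinatewise. $f\colon[n]^2\to\{0,1\}$ is $2$-monotone if there are no $x\preceq y\preceq z$ with $(f(x),f(y),f(z))=(1,0,1)$; $\mathcal{M}^{(2)}_2$ denotes the set of $2$-monotone functions on $[n]^2$ and $\mathrm{dist}(f,\mathcal{M}^{(2)}_2)$ the minimum normalized Hamming distance from $f$ to it. $f$ is $2$-column-wise-monotone if each column map $i\mapsto f(i,j)$ has no $a\leq b\leq c$ with values $1,0,1$. For a column $j$ on which $f$ is not constant, $\underline{f}_j=\min\{i: f(i,j)\neq f(1,j)\}-1$ and $\overline{f}_j=\max\{i: f(i,j)\neq f(n,j)\}+1$; otherwise $\underline{f}_j=\overline{f}_j=1$. These sequences are viewed as functions $[n]\to[n]$. For $a,b\colon[n]\to[n]$, $L_1(a,b)=\frac{1}{n^2}\sum_{j=1}^n|a(j)-b(j)|$, and $L_1(a,\mathcal{M}_1)$ is the minimum of $L_1(a,b)$ over non-increasing $b\colon[n]\to[n]$. *)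

(* Defs.v *)
From mathcomp Require Import all_boot all_order all_algebra.
Set Implicit Arguments. Unset Strict Implicit. Unset Printing Implicit Defensive.
Import Order.TTheory GRing.Theory Num.Theory.

(* Conventions: [n] = {1,...,n} is represented by 'I_n, the ordinal k
   standing for k+1.  A function f : [n]^2 -> {0,1} is an element of
   {ffun 'I_n * 'I_n -> bool}; the first coordinate is the row index i,
   the second the column index j (column map: i |-> f(i,j)). *)

Section Defs.
Variable n : nat.
Local Notation pt := ('I_n * 'I_n)%type.
Local Notation fn := {ffun pt -> bool}.

Definition preceq (x y : pt) : bool := (x.1 <= y.1) && (x.2 <= y.2).

Definition two_monotone (g : fn) : bool :=
  [forall x : pt, forall y : pt, forall z : pt,
     (preceq x y && preceq y z) ==> ~~ [&& g x, ~~ g y & g z]].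

Definition col_two_monotone (f : fn) : bool :=
  [forall j : 'I_n, forall a : 'I_n, forall b : 'I_n, forall c : 'I_n,
     ((a <= b) && (b <= c)) ==> ~~ [&& f (a, j), ~~ f (b, j) & f (c, j)]].

(* normalized Hamming distance to the class of 2-monotone functions;
   the default n*n of the iterated minimum is an upper bound of all
   Hamming distances, so this is the genuine minimum *)
Definition hamming (f g : fn) : nat := #|[set x | f x != g x]|.
Definition dist_M2 (f : fn) : rat :=
  (\big[minn/(n * n)%N]_(g : fn | two_monotone g) hamming f g)%:R
  / (n * n)%:R.

(* value of f at the 1-based point (i, j), for 1 <= i, j <= n *)
Definition fv (f : fn) (i j : nat) : bool :=
  if @insub nat (fun k => k < n) 'I_n i.-1 is Some i' then
    if @insub nat (fun k => k < n) 'I_n j.-1 is Some j' then f (i', j')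
    else false
  else false.

Definition col_nonconst (f : fn) (j : nat) : bool :=
  [exists i : 'I_n, fv f i.+1 j != fv f 1 j].

Definition f_under (f : fn) (j : 'I_n) : nat :=
  if col_nonconst f j.+1 then
    (\big[minn/n]_(i < n | fv f i.+1 j.+1 != fv f 1 j.+1) i.+1) - 1
  else 1.

Definition f_over (f : fn) (j : 'I_n) : nat :=
  if col_nonconst f j.+1 then
    (\max_(i < n | fv f i.+1 j.+1 != fv f n j.+1) i.+1) + 1
  else 1.

(* non-increasing b : [n] -> [n] (b j : 'I_n stands for the value (b j)+1) *)
Definition nonincreasing (b : {ffun 'I_n -> 'I_n}) : bool :=
  [forall j1 : 'I_n, forall j2 : 'I_n, (j1 <= j2) ==> (b j2 <= b j1)].

Definition L1sum (a : 'I_n -> nat) (b : {ffun 'I_n -> 'I_n}) : nat :=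
  \sum_(j < n) ((a j - (b j).+1) + ((b j).+1 - a j)).

(* L_1(a, M_1) = min over non-increasing b of (1/n^2) sum_j |a j - b j|;
   the default of the iterated minimum bounds every L1sum a b *)
Definition L1_M1 (a : 'I_n -> nat) : rat :=
  (\big[minn/(\sum_(j < n) (a j + n))%N]_(b : {ffun 'I_n -> 'I_n} | nonincreasing b)
     L1sum a b)%:R / (n * n)%:R.

End Defs.

(* Main.v *)
Require Import Defs.
From mathcomp Require Import all_boot all_order all_algebra.
From mathcomp Require Import zify lra.
Import Order.TTheory GRing.Theory Num.Theory.

Lemma win (k a b : nat) n : (\sum_(r < n) ((a <= r + k) && (r + k < b)) <= minn (n + k) b - a)%N.
Proof. elim: n => [|n IH]; first by rewrite big_ord0.
rewrite big_ord_recr /=. move: IH. set S := \sum_(r < n) _. move=> IH.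
case: (leqP a (n+k)) => h1; case: (ltnP (n+k) b) => h2 /=; lia. Qed.

Lemma ptw (A B A' B' r : nat) : (((A <= r) && (r.+1 < B) != (A' <= r) && (r.+1 < B')) <= ((minn A A' <= r + 0) && (r + 0 < maxn A A')) + ((minn B B' <= r + 1) && (r + 1 < maxn B B')))%N.
Proof.
case: (leqP A r) => ?; case: (leqP A' r) => ?; case: (ltnP r.+1 B) => ?; case: (ltnP r.+1 B') => ?;
case: (leqP (minn A A') (r+0)) => ?; case: (ltnP (r+0) (maxn A A')) => ?;
case: (leqP (minn B B') (r+1)) => ?; case: (ltnP (r+1) (maxn B B')) => ? /=; lia. Qed.

Lemma colb n (A B A' B' : nat) :
  (\sum_(r < n) ((A <= r) && (r.+1 < B) != (A' <= r) && (r.+1 < B'))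
   <= (A - A' + (A' - A)) + (B - B' + (B' - B)))%N.
Proof.
apply: leq_trans; first by apply: leq_sum => r _; apply: ptw.
rewrite big_split /=.
apply: leq_add; [apply: leq_trans (win 0 _ _ n) _ | apply: leq_trans (win 1 _ _ n) _]; lia.
Qed.

Lemma bigmin_le (I : finType) (P : pred I) (F : I -> nat) d i :
  P i -> (\big[minn/d]_(j | P j) F j <= F i)%N.
Proof.
move=> Pi; rewrite /index_enum; have : i \in Finite.enum I by rewrite -enumT mem_enum.
elim: (Finite.enum I) => [//|x s IH]; rewrite inE big_cons.
case/orP => [/eqP <-|/IH h]; first by rewrite Pi geq_minl.
by case: (P x) => //; apply: leq_trans (geq_minr _ _) h.
Qed.

Lemma big_sel (I : finType) (P : pred I) (F : I -> nat) (op : nat -> nat -> nat) d :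
  (forall x y, op x y = x \/ op x y = y) ->
  \big[op/d]_(j | P j) F j = d \/ exists i, P i /\ \big[op/d]_(j | P j) F j = F i.
Proof.
move=> Hop; apply: (big_ind (fun x => x = d \/ exists i, P i /\ x = F i)).
- by left.
- move=> x y hx hy; by case: (Hop x y) => ->.
- by move=> i Pi; right; exists i.
Qed.

Section Main.
Variable n : nat.
Variable f : {ffun 'I_n * 'I_n -> bool}.
Hypothesis Hc : col_two_monotone f.
Hypothesis Hb : forall j : nat, (1 <= j <= n)%N -> fv f 1 j = false /\ fv f n j = false.

Lemma fvE (i j : 'I_n) : fv f i.+1 j.+1 = f (i, j).
Proof.
rewrite /fv /=; case: insubP => [i' _ /val_inj ->|]; last by rewrite ltn_ord.
by case: insubP => [j' _ /val_inj ->|]; last by rewrite ltn_ord.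
Qed.

Lemma under_eq (j : 'I_n) : f_under f j =
  if [exists i, f (i, j)] then (\big[minn/n]_(i < n | f (i, j)) i.+1) - 1 else 1.
Proof.
have E1 : fv f 1 j.+1 = false by apply: (Hb j.+1 (ltn_ord j)).1.
rewrite /f_under /col_nonconst E1.
have -> : [exists i : 'I_n, fv f i.+1 j.+1 != false] = [exists i, f (i, j)].
  by apply: eq_existsb => i; rewrite fvE; case: (f _).
case: ifP => // _; congr (_ - _); apply: eq_bigl => i; rewrite fvE; by case: (f _).
Qed.

Lemma over_eq (j : 'I_n) : f_over f j =
  if [exists i, f (i, j)] then (\max_(i < n | f (i, j)) i.+1) + 1 else 1.
Proof.
have E1 : fv f 1 j.+1 = false by apply: (Hb j.+1 (ltn_ord j)).1.
have E2 : fv f n j.+1 = false by apply: (Hb j.+1 (ltn_ord j)).2.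
rewrite /f_over /col_nonconst E1 E2.
have -> : [exists i : 'I_n, fv f i.+1 j.+1 != false] = [exists i, f (i, j)].
  by apply: eq_existsb => i; rewrite fvE; case: (f _).
case: ifP => // _; congr (_ + _); apply: eq_bigl => i; rewrite fvE; by case: (f _).
Qed.

Lemma colE (r j : 'I_n) : f (r, j) = (f_under f j <= r)%N && (r.+1 < f_over f j)%N.
Proof.
rewrite under_eq over_eq; case: ifP => [/existsP [i0 fi0] | /existsPn hn]; last first.
  by rewrite (negbTE (hn r)) andbF.
have [a [fa ma]] : exists a, f (a, j) /\ \big[minn/n]_(i < n | f (i, j)) i.+1 = a.+1.
  case: (big_sel _ (fun i : 'I_n => f (i, j)) (fun i => i.+1) minn n
   (fun x y => ltac:(rewrite /minn; case: ifP => _; [left|right]; done))) => [m_d|//].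
  exists i0; split => //.
  have := bigmin_le _ (fun i : 'I_n => f (i, j)) (fun i => i.+1) n _ fi0.
  rewrite m_d => h; have := ltn_ord i0; lia.
have LM := fun i => @leq_bigmax_cond _ (fun i : 'I_n => f (i,j)) (fun i : 'I_n => i.+1) i.
have [M_d | [c [fc Mc]]] := big_sel _ (fun i : 'I_n => f (i, j)) (fun i => i.+1) maxn 0
   (fun x y => ltac:(rewrite /maxn; case: ifP => _; [right|left]; done)).
- by have := LM i0 fi0; rewrite M_d.
rewrite ma Mc /=.
case fr: (f (r, j)).
- have h1 := bigmin_le _ (fun i : 'I_n => f (i, j)) (fun i => i.+1) n _ fr.
  have h2 := LM r fr.
  rewrite ma /= in h1; rewrite Mc /= in h2; apply/esym/andP; split; lia.
apply/esym/negbTE/negP => /andP [h1 h2].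
move/forallP: Hc => /(_ j) /forallP /(_ a) /forallP /(_ r) /forallP /(_ c) /implyP.
rewrite fa fr fc /=; move=> H; suff: false by []; apply: H; apply/andP; split; lia.
Qed.

Lemma noninc_le (b : {ffun 'I_n -> 'I_n}) (j1 j2 : 'I_n) :
  nonincreasing b -> (j1 <= j2)%N -> (b j2 <= b j1)%N.
Proof. by move/forallP/(_ j1)/forallP/(_ j2)/implyP. Qed.

Lemma H_le (bo bu : {ffun 'I_n -> 'I_n}) : nonincreasing bo -> nonincreasing bu ->
  (\big[minn/(n*n)]_(g | two_monotone g) hamming f g
     <= L1sum (f_over f) bo + L1sum (f_under f) bu)%N.
Proof.
move=> Ho Hu.
pose g := [ffun x : 'I_n * 'I_n => ((bu x.2).+1 <= x.1)%N && (x.1.+1 < (bo x.2).+1)%N].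
have tg : two_monotone g.
  apply/forallP => x; apply/forallP => y; apply/forallP => z; apply/implyP.
  case: x y z => [x1 x2] [y1 y2] [z1 z2].
  rewrite /preceq /= => /andP [/andP [h1 h2] /andP [h3 h4]].
  have e1 := noninc_le _ _ _ Hu h2; have e2 := noninc_le _ _ _ Ho h4.
  rewrite !ffunE /=; apply/negP => /and3P [/andP [a1 a2] /negP nb /andP [c1 c2]].
  by apply: nb; apply/andP; split; lia.
apply: leq_trans (bigmin_le _ _ _ _ g tg) _.
rewrite /hamming /L1sum -big_split /=.
rewrite -sum1_card big_mkcond /=.
rewrite (eq_bigr (fun x : 'I_n * 'I_n => nat_of_bool (f (x.1, x.2) != g (x.1, x.2)))); last first.
  by move=> [r c] _; rewrite inE; case: (_ != _).
rewrite -(pair_bigA _ (fun r c => nat_of_bool (f (r, c) != g (r, c)))) exchange_big /=.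
apply: leq_sum => c _.
rewrite (eq_bigr (fun r : 'I_n => nat_of_bool ((f_under f c <= r)%N && (r.+1 < f_over f c)%N
   != ((bu c).+1 <= r)%N && (r.+1 < (bo c).+1)%N))); last first.
  by move=> r _; rewrite colE ffunE.
apply: leq_trans (colb n _ _ _ _) _. lia.
Qed.

End Main.

Lemma def_ge n (a : 'I_n -> nat) : (n * n <= \sum_(j < n) (a j + n))%N.
Proof.
apply: (@leq_trans (\sum_(j < n) n)); first by rewrite sum_nat_const card_ord.
by apply: leq_sum => j _; apply: leq_addl.
Qed.

Lemma minn_sel (K : nat -> Prop) x y : K x -> K y -> K (minn x y).
Proof. by rewrite /minn; case: ifP. Qed.

Local Open Scope ring_scope.

Theorem lemma5p3 (n : nat) (f : {ffun 'I_n * 'I_n -> bool}) :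
  col_two_monotone f ->
  (forall j : nat, (1 <= j <= n)%N -> fv f 1 j = false /\ fv f n j = false) ->
  dist_M2 f <= L1_M1 (f_over f) + L1_M1 (f_under f) /\
  (forall eps : rat, eps <= dist_M2 f ->
     eps / 2%:R <= L1_M1 (f_under f) \/ eps / 2%:R <= L1_M1 (f_over f)).
Proof.
move=> Hc Hb.
set Hn := \big[minn/(n*n)%N]_(g | two_monotone g) hamming f g.
have HnN : (Hn <= n * n)%N.
  rewrite /Hn; apply: (big_ind (fun x : nat => (x <= n * n)%N)) => //.
  - by move=> x y hx hy; exact: (minn_sel (fun x => x <= n * n)%N).
  - move=> g _; rewrite /hamming; apply: leq_trans (max_card _) _.
    by rewrite card_prod !card_ord.
have key : (Hn <= \big[minn/(\sum_(j < n) (f_over f j + n))%N]_(b : {ffun 'I_n -> 'I_n} | nonincreasing b)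
     L1sum (f_over f) b + \big[minn/(\sum_(j < n) (f_under f j + n))%N]_(b : {ffun 'I_n -> 'I_n} | nonincreasing b)
     L1sum (f_under f) b)%N.
  set Y := (X in (_ <= _ + X)%N).
  apply: (big_ind (fun x => Hn <= x + Y)%N).
  - by apply: leq_trans HnN _; exact: (leq_trans (def_ge _ (f_over f)) (leq_addr _ _)).
  - by move=> x y hx hy; exact: (minn_sel (fun x => Hn <= x + Y)%N).
  move=> bo Hbo; apply: (big_ind (fun y => Hn <= L1sum (f_over f) bo + y)%N).
  - by apply: leq_trans HnN _; exact: (leq_trans (def_ge _ (f_under f)) (leq_addl _ _)).
  - by move=> x y hx hy; exact: (minn_sel (fun y => Hn <= L1sum (f_over f) bo + y)%N).
  by move=> bu Hbu; apply: H_le.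
have P1 : dist_M2 f <= L1_M1 (f_over f) + L1_M1 (f_under f).
  rewrite /dist_M2 /L1_M1 -mulrDl -natrD -/Hn.
  by apply: ler_wpM2r; [rewrite invr_ge0 ler0n | rewrite ler_nat].
split => // eps he.
case: (leP (eps / 2%:R) (L1_M1 (f_under f))) => h1; first by left.
case: (leP (eps / 2%:R) (L1_M1 (f_over f))) => h2; first by right.
exfalso; lra.
Qed.
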